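(* Let $W,V$ be subspaces of $\mathbb{R}^n$ with $\mathbb{R}^n=W\oplus V^\perp$, and let $\mu\in\mathcal{P}_2(W)$ be a probabilistic frame for $W$ with frame operator $\mathbf{S}_\mu$. A measurable map $T:W\to V$ is such that $T_\#\mu$ is an oblique dual probabilistic frame of $\mu$ on $V$ with respect to the coupling $(\mathbf{Id},T)_\#\mu$ if and only if there is a measurable map $h:W\to V$ with $h_\#\mu\in\mathcal{P}_2(V)$ and $\int_W\mathbf{x}\,h(\mathbf{x})^t\,d\mu(\mathbf{x})=\mathbf{0}_{n\times n}$ such that for all $\mathbf{x}\in W$, $$T(\mathbf{x})=\boldsymbol{\pi}_{VW^\perp}\mathbf{S}_\mu^\dagger\mathbf{x}+h(\mathbf{x}).$$
   Context: $\mathcal{P}_2(S)$ denotes Borel probability measures on $\mathbb{R}^n$ concentrated on the subspace $S$ with finite second moment. $\mu\in\mathcal{P}_2(W)$ is a probabilistic frame for $W$ if there exist $0<A\le B<\infty$ with $A\|\mathbf{x}\|^2\le\int_W|\langle\mathbf{x},\mathbf{y}\rangle|^2d\mu(\mathbf{y})\le B\|\mathbf{x}\|^2$ for all $\mathbf{x}\in W$; its frame operator is $\mathbf{S}_\mu=\int_W\mathbf{y}\mathbf{y}^td\mu(\mathbf{y})$, with Moore–Penrose inverse $\mathbf{S}_\mu^\dagger$. $(\mathbf{Id},T)_\#\mu$ is the pushforward of $\mu$ under $\mathbf{x}\mapsto(\mathbf{x},T(\mathbf{x}))$. $\boldsymbol{\pi}_{WV^\perp}$ is the oblique projection onto $W$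 along $V^\perp$ and $\boldsymbol{\pi}_{VW^\perp}$ the oblique projection onto $V$ along $W^\perp$. $\nu\in\mathcal{P}_2(V)$ is an oblique dual probabilistic frame of $\mu$ on $V$ with respect to a coupling $\gamma$ of $\mu$ and $\nu$ if $\int_{W\times V}\mathbf{x}\mathbf{y}^t\,d\gamma(\mathbf{x},\mathbf{y})=\boldsymbol{\pi}_{WV^\perp}$. *)

(* Defs.v *)
(* mathcomp 2.5 + mathcomp-analysis 1.16.
   Conventions:
   - R^n is modelled by column vectors 'cV[R]_n, equipped with the Borel
     sigma-algebra (generated by the open sets of the matrix topology).
   - A linear subspace S of R^n is represented by a square matrix
     S : 'M[R]_n whose ROW SPACE is S (mathcomp's mxalgebra convention);
     a column vector x lies in S iff (x^T <= S)%MS.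
   - Matrices act on column vectors from the left (x |-> A *m x). *)
From HB Require Import structures.
From mathcomp Require Import all_boot all_order all_algebra.
From mathcomp Require Import all_classical all_reals all_analysis.
Set Implicit Arguments.
Unset Strict Implicit.
Unset Printing Implicit Defensive.
Import Order.TTheory GRing.Theory Num.Theory numFieldNormedType.Exports.
Local Open Scope classical_set_scope.
Local Open Scope ring_scope.

Definition Rn (R : realType) (n : nat) :=
  g_sigma_algebraType (open : set (set 'cV[R]_n)).

Definition inS (R : realType) (n : nat) (S : 'M[R]_n) (x : 'cV[R]_n) : bool :=
  (x^T <= S)%MS.

Definition perp (R : realType) (n : nat) (S : 'M[R]_n) : 'M[R]_n := kermx S^T.

Definition dotv (R : realType) (n : nat) (x y : 'cV[R]_n) : R :=
  \sum_i x i ord0 * y i ord0.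
Definition sqnorm (R : realType) (n : nat) (x : 'cV[R]_n) : R := dotv x x.

Definition mx_integral d (X : measurableType d) (R : realType) (p q : nat)
  (mu : {measure set X -> \bar R}) (F : X -> 'M[R]_(p, q)) : 'M[R]_(p, q) :=
  \matrix_(i, j) Rintegral mu setT (fun x => F x i j).

Definition P2 (R : realType) (n : nat) (S : 'M[R]_n)
  (mu : {measure set Rn R n -> \bar R}) : Prop :=
  [/\ mu setT = 1%E,
      mu [set x : Rn R n | ~~ inS S x] = 0%E &
      (\int[mu]_x (sqnorm x)%:E < +oo)%E].

Definition prob_frame (R : realType) (n : nat) (S : 'M[R]_n)
  (mu : {measure set Rn R n -> \bar R}) : Prop :=
  exists A B : R, [/\ 0 < A, A <= B &
    forall x : 'cV[R]_n, inS S x ->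
      ((A * sqnorm x)%:E <= \int[mu]_y ((dotv x y) ^+ 2)%:E)%E /\
      (\int[mu]_y ((dotv x y) ^+ 2)%:E <= (B * sqnorm x)%:E)%E].

Definition frame_op (R : realType) (n : nat)
  (mu : {measure set Rn R n -> \bar R}) : 'M[R]_n :=
  mx_integral mu (fun y : Rn R n => (y : 'cV[R]_n) *m (y : 'cV[R]_n)^T).

Definition is_MP_inverse (R : realType) (n : nat) (A X : 'M[R]_n) : Prop :=
  [/\ A *m X *m A = A, X *m A *m X = X, (A *m X)^T = A *m X &
      (X *m A)^T = X *m A].
Definition mp_inv (R : realType) (n : nat) (A : 'M[R]_n) : 'M[R]_n :=
  xget 0 [set X | is_MP_inverse A X].

(* oblique projection onto S along U (for R^n = S (+) U), acting on column
   vectors; proj_mx acts on row vectors, hence the transpose *)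
Definition oproj (R : realType) (n : nat) (S U : 'M[R]_n) : 'M[R]_n :=
  (proj_mx S U)^T.

Definition is_coupling (R : realType) (n : nat)
  (mu nu : {measure set Rn R n -> \bar R})
  (gam : {measure set (Rn R n * Rn R n) -> \bar R}) : Prop :=
  forall A : set (Rn R n), measurable A ->
    gam (A `*` setT) = mu A /\ gam (setT `*` A) = nu A.

Definition oblique_dual (R : realType) (n : nat) (W V : 'M[R]_n)
  (mu nu : {measure set Rn R n -> \bar R})
  (gam : {measure set (Rn R n * Rn R n) -> \bar R}) : Prop :=
  [/\ P2 V nu, is_coupling mu nu gam &
      mx_integral gam (fun p => (p.1 : 'cV[R]_n) *m (p.2 : 'cV[R]_n)^T)
        = oproj W (perp V)].

Definition graph_map d d' (X : measurableType d) (Y : measurableType d')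
  (f : {mfun X >-> Y}) : X -> X * Y := fun x => (x, f x).

HB.instance Definition _ d d' (X : measurableType d) (Y : measurableType d')
  (f : {mfun X >-> Y}) :=
  isMeasurableFun.Build _ _ X (X * Y)%type (graph_map f)
    (measurable_fun_pair (@measurable_id _ X setT) (@measurable_funPT _ _ _ _ f)).

(* the pushforward (image) measure f_# mu, i.e. the library's
   [pushforward mu f] (A |-> mu (f^-1 A)) packaged as a measure using the
   measurability of f *)
Definition push d d' (X : measurableType d) (Y : measurableType d')
  (R : realType) (mu : {measure set X -> \bar R}) (f : {mfun X >-> Y})
  : {measure set Y -> \bar R} :=
  @measure_function_pushforward__canonical__measure_function_Measure
    _ _ X Y R mu f (@measurable_funPT _ _ _ _ f).

Lemma pushE d d' (X : measurableType d) (Y : measurableType d')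
  (R : realType) (mu : {measure set X -> \bar R}) (f : {mfun X >-> Y})
  (A : set Y) : push mu f A = pushforward mu f A.
Proof. by []. Qed.

(* Main.v *)
Require Import Defs.
From HB Require Import structures.
From mathcomp Require Import all_boot all_order all_algebra.
From mathcomp Require Import all_classical all_reals all_analysis.
From mathcomp Require Import zify ring lra.
From mathcomp Require Import measurable_realfun.
Import Order.TTheory GRing.Theory Num.Theory numFieldNormedType.Exports.
Local Open Scope classical_set_scope.
Local Open Scope ring_scope.
Set Implicit Arguments. Unset Strict Implicit. Unset Printing Implicit Defensive.


Section LA.
Variable R : realType.

Lemma rv_self_eq0 (p : nat) (v : 'rV[R]_p) : v *m v^T = 0 -> v = 0.
Proof.
move=> /(congr1 (fun M : 'M[R]_1 => M 0 0)); rewrite !mxE.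
move=> E.
have H : forall j, true -> v 0 j * v^T j 0 = 0.
  by apply: psumr_eq0P E => j _; rewrite mxE -expr2 sqr_ge0.
apply/rowP => j; rewrite mxE; have := H j isT; rewrite mxE => /eqP.
by rewrite mulf_eq0 orbb => /eqP.
Qed.

Lemma gram_unit (r p : nat) (K : 'M[R]_(r, p)) : row_free K -> K *m K^T \in unitmx.
Proof.
move=> fK; rewrite -row_free_unit -kermx_eq0 -submx0; apply/row_subP => i.
have /sub_kermxP : (row i (kermx (K *m K^T)) <= kermx (K *m K^T))%MS by apply: row_sub.
set u := row i _ => hu.
have : u *m K = 0.
  by apply: rv_self_eq0; rewrite trmx_mul !mulmxA -(mulmxA u K) hu mul0mx.
by move/eqP; rewrite mulmx_free_eq0 // => /eqP ->; rewrite sub0mx.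
Qed.

Lemma mp_core (n r : nat) (B : 'M[R]_(n, r)) (C : 'M[R]_(r, n)) :
  B^T *m B \in unitmx -> C *m C^T \in unitmx ->
  exists X, is_MP_inverse (B *m C) X.
Proof.
move=> uB uC.
set G1 := invmx (B^T *m B); set G2 := invmx (C *m C^T).
have hG1' : G1 *m (B^T *m B) = 1%:M by rewrite mulVmx.
have hG2 : C *m C^T *m G2 = 1%:M by rewrite mulmxV.
have hG2' : G2 *m (C *m C^T) = 1%:M by rewrite mulVmx.
have tG1 : G1^T = G1 by rewrite /G1 trmx_inv trmx_mul trmxK.
have tG2 : G2^T = G2 by rewrite /G2 trmx_inv trmx_mul trmxK.
exists (C^T *m G2 *m G1 *m B^T).
have SX : B *m C *m (C^T *m G2 *m G1 *m B^T) = B *m G1 *m B^T.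
  by rewrite !mulmxA -(mulmxA B C) -(mulmxA B) hG2 mulmx1.
have XS : (C^T *m G2 *m G1 *m B^T) *m (B *m C) = C^T *m G2 *m C.
  by rewrite !mulmxA -!(mulmxA _ B^T B) -(mulmxA _ G1) hG1' mulmx1.
split.
- by rewrite SX !mulmxA -(mulmxA _ B^T B) -(mulmxA _ G1 (B^T *m B)) hG1' mulmx1.
- rewrite XS !mulmxA -(mulmxA _ C C^T) -(mulmxA _ G2 (C *m C^T)) hG2' mulmx1.
  by [].
- by rewrite SX !trmx_mul trmxK tG1 mulmxA.
- by rewrite XS !trmx_mul trmxK tG2 mulmxA.
Qed.

Lemma mp_exists (n : nat) (S : 'M[R]_n) : exists X, is_MP_inverse S X.
Proof.
have uB : (col_base S)^T *m (col_base S)^T^T \in unitmx.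
  apply: gram_unit; rewrite /row_free mxrank_tr.
  by have := col_base_full S; rewrite /row_full.
have uC : row_base S *m (row_base S)^T \in unitmx.
  by apply: gram_unit; apply: row_base_free.
rewrite trmxK in uB.
by have := mp_core uB uC; rewrite mulmx_base.
Qed.

Lemma mp_invP (n : nat) (S : 'M[R]_n) : is_MP_inverse S (mp_inv S).
Proof.
rewrite /mp_inv; case: xgetP => //.
by have [X hX] := mp_exists S => /(_ X).
Qed.


Lemma orth (m p k n : nat) (a : 'M[R]_(m, n)) (X : 'M[R]_(k, n)) (b : 'M[R]_(p, n)) :
  (a <= X)%MS -> b *m X^T = 0 -> a *m b^T = 0.
Proof.
case/submxP => D -> hb.
by rewrite -mulmxA -[X *m b^T]trmxK trmx_mul trmxK hb trmx0 mulmx0.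
Qed.

Lemma perpE (m n : nat) (V : 'M[R]_n) (u : 'M[R]_(m, n)) :
  (u <= perp V)%MS = (u *m V^T == 0).
Proof. by rewrite /perp sub_kermx. Qed.

Lemma perp_mul (n : nat) (V : 'M[R]_n) : perp V *m V^T = 0.
Proof. by apply/eqP; rewrite -perpE. Qed.

Lemma rank_perp (n : nat) (V : 'M[R]_n) : \rank (perp V) = (n - \rank V)%N.
Proof. by rewrite /perp mxrank_ker mxrank_tr. Qed.

Lemma dual_direct (n : nat) (W V : 'M[R]_n) :
  (W + perp V == 1%:M)%MS -> mxdirect (W + perp V) ->
  (V :&: perp W = 0)%MS /\ (V + perp W == 1%:M)%MS.
Proof.
move=> h1 /mxdirect_addsP h2.
have rk : (\rank W + (n - \rank V))%N = n.
  by rewrite -rank_perp -mxrank_disjoint_sum // (eqmxP h1) mxrank1.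
have rV := rank_leq_col V; have rW := rank_leq_col W.
have cap0 : (V :&: perp W = 0)%MS.
  apply/eqP; rewrite -submx0; apply/row_subP => i; rewrite submx0.
  set u := row i _.
  have uV : (u <= V)%MS by apply: submx_trans (row_sub i _) (capmxSl _ _).
  have uW : (u <= perp W)%MS by apply: submx_trans (row_sub i _) (capmxSr _ _).
  have : (u <= W + perp V)%MS by rewrite (eqmxP h1) submx1.
  case/sub_addsmxP => x ux.
  apply/eqP; apply: rv_self_eq0.
  rewrite [in X in _ *m X]ux linearD /= mulmxDr.
  have -> : u *m (x.1 *m W)^T = 0.
    by move: uW; rewrite perpE => /eqP uW; rewrite trmx_mul mulmxA uW mul0mx.
  have -> : u *m (x.2 *m perp V)^T = 0.
    by rewrite trmx_mul mulmxA (orth uV (perp_mul V)) mul0mx.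
  by rewrite addr0.
split => //.
apply/andP; split; first exact: submx1.
rewrite sub1mx /row_full mxrank_disjoint_sum ?rank_perp //.
apply/eqP; lia.
Qed.

Lemma proj_tr (n : nat) (W V : 'M[R]_n) :
  (W + perp V == 1%:M)%MS -> mxdirect (W + perp V) ->
  (proj_mx V (perp W))^T = proj_mx W (perp V).
Proof.
move=> h1 h2; have [c2 h3] := dual_direct h1 h2.
have c1 : (W :&: perp V = 0)%MS by apply/mxdirect_addsP.
set N := proj_mx V (perp W); set M := proj_mx W (perp V).
set N' := proj_mx (perp W) V; set M' := proj_mx (perp V) W.
have NN : N + N' = 1%:M.
  have h3' : (1%:M <= V + perp W)%MS by case/andP: h3.
  by have := add_proj_mx c2 h3'; rewrite !mul1mx.
have MM : M + M' = 1%:M.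
  have h1' : (1%:M <= W + perp V)%MS by case/andP: h1.
  by have := add_proj_mx c1 h1'; rewrite !mul1mx.
have Msub : (M <= W)%MS by rewrite -[M]mul1mx proj_mx_sub.
have Nsub : (N <= V)%MS by rewrite -[N]mul1mx proj_mx_sub.
have N'sub : (N' <= perp W)%MS by rewrite -[N']mul1mx proj_mx_sub.
have M'sub : (M' <= perp V)%MS by rewrite -[M']mul1mx proj_mx_sub.
have e1 : M = M *m N^T.
  rewrite -{1}[M]mulmx1 -(@trmx1 R n) -NN linearD /= mulmxDr.
  have -> : M *m N'^T = 0 by apply: orth Msub _; move: N'sub; rewrite perpE => /eqP.
  by rewrite addr0.
have e2 : N^T = M *m N^T.
  rewrite -{1}[N^T]mul1mx -MM mulmxDl.
  have -> : M' *m N^T = 0.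
    apply/trmx_inj; rewrite trmx_mul trmxK trmx0.
    by apply: orth Nsub _; move: M'sub; rewrite perpE => /eqP.
  by rewrite addr0.
by rewrite e2 -e1.
Qed.

Lemma key_alg (n : nat) (W V S : 'M[R]_n) :
  (W + perp V == 1%:M)%MS -> mxdirect (W + perp V) ->
  S^T = S -> (W <= S)%MS ->
  S *m (oproj V (perp W) *m mp_inv S)^T = oproj W (perp V).
Proof.
move=> h1 h2 sS WS; have [P1 P2 P3 P4] := mp_invP S.
rewrite /oproj -(proj_tr h1 h2) trmxK.
set N := proj_mx V (perp W); set X := mp_inv S.
have NW : (N^T <= S)%MS.
  rewrite (proj_tr h1 h2); apply: submx_trans WS.
  by rewrite -[proj_mx W _]mul1mx proj_mx_sub.
have e : N^T *m (X *m S) = N^T.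
  by case/submxP: NW => D ->; rewrite -!mulmxA (mulmxA S) P1.
rewrite trmx_mul trmxK mulmxA.
have -> : S *m X^T = X *m S by rewrite -P4 trmx_mul sS.
by rewrite -[RHS]trmxK -e trmx_mul P4 trmxK.
Qed.

Lemma oproj_in (n : nat) (V U : 'M[R]_n) (y : 'cV[R]_n) : inS V (oproj V U *m y).
Proof. by rewrite /inS /oproj trmx_mul trmxK proj_mx_sub. Qed.

Lemma W_sub_S (n : nat) (W S : 'M[R]_n) : S^T = S -> (S <= W)%MS ->
  (forall x : 'cV[R]_n, inS W x -> S *m x = 0 -> x = 0) -> (W <= S)%MS.
Proof.
move=> sS SW hx.
have cap : (W :&: kermx S = 0)%MS.
  apply/eqP; rewrite -submx0; apply/row_subP => i; rewrite submx0.
  set u := row i _.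
  have uW : (u <= W)%MS by apply: submx_trans (row_sub i _) (capmxSl _ _).
  have /sub_kermxP uS : (u <= kermx S)%MS by apply: submx_trans (row_sub i _) (capmxSr _ _).
  apply/eqP; apply: trmx_inj; rewrite trmx0; apply: hx; first by rewrite /inS trmxK.
  by rewrite -{1}sS -trmx_mul uS trmx0.
have := mxrank_disjoint_sum cap; rewrite mxrank_ker => e.
have := rank_leq_col (W + kermx S)%MS; rewrite e => le1.
have rS := rank_leq_col S.
rewrite -(mxrank_leqif_sup SW).2 eqn_leq mxrankS //=.
lia.
Qed.

End LA.


Section meas.
Variables (R : realType) (n : nat).

Lemma open_meas (U : set 'cV[R]_n) : open U -> measurable (U : set (Rn R n)).
Proof. by move=> oU; apply: sub_sigma_algebra. Qed.

Lemma cont_mfun (f : 'cV[R]_n -> R) : continuous f ->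
  measurable_fun setT (f : Rn R n -> R).
Proof.
move=> /continuousP cf; apply: (measurability _ (measurable_realfun.RGenOpens.measurableE R)).
move=> _ [_ [a [b ->]] <-]; rewrite setTI; apply: open_meas.
exact/cf/interval_open.
Qed.

Lemma mcoord i j : measurable_fun setT (fun x : Rn R n => x i j).
Proof. exact: cont_mfun (@coord_continuous _ _ _ i j). Qed.

Lemma meas_forall d (T : measurableType d) (P : 'I_n -> set T) :
  (forall i, measurable (P i)) -> measurable [set t | forall i, P i t].
Proof.
move=> mP.
suff : forall s : seq 'I_n, measurable [set t | forall i, i \in s -> P i t].
  move/(_ (enum 'I_n)); congr measurable; apply/seteqP; split => t /= h i.
    by apply: h; rewrite mem_enum.
  by move=> _; apply: h.
elim => [|a s ih].
  by rewrite (_ : [set t | _] = setT) //; apply/seteqP; split => t //= _ i.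
rewrite (_ : [set t | _] = P a `&` [set t | forall i, i \in s -> P i t]).
  exact: measurableI.
apply/seteqP; split => t /=.
  by move=> h; split; [apply: h; rewrite mem_head | move=> i iS; apply: h; rewrite in_cons iS orbT].
by move=> [Pa h] i; rewrite in_cons => /orP[/eqP ->|/h].
Qed.

Definition box (cr : {ffun 'I_n -> rat} * rat) : set 'cV[R]_n :=
  [set y | forall i, `|y i 0 - ratr (cr.1 i)| < ratr cr.2].

Lemma open_cover (U : set 'cV[R]_n) (x : 'cV[R]_n) : open U -> U x ->
  exists cr, box cr x /\ box cr `<=` U.
Proof.
move=> oU Ux.
have : nbhs x U by rewrite nbhsE; exists U.
case/nbhs_ballP => e e0 eU.
have /rat_in_itvoo [r] : 0 < e / 2 by rewrite divr_gt0.
rewrite in_itv /= => /andP[r0 re].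
have : forall i : 'I_n, exists q : rat, ratr q \in `](x i 0 - ratr r), (x i 0 + ratr r)[.
  move=> i; apply: rat_in_itvoo.
  by rewrite ltrBlDr -addrA ltrDl -mulr2n mulrn_wgt0.
case/fin_all_exists => c hc.
exists (finfun c, r); split.
  move=> i /=; rewrite ffunE; have := hc i.
  by rewrite in_itv /= ltr_distlC.
move=> y /= hy; apply: eU.
split => // i j; rewrite (ord1 j) /ball /=.
have := hy i; have := hc i; rewrite ffunE in_itv /= ltr_distlC => /andP[h1 h2].
rewrite ltr_distlC => /andP[h3 h4].
move: e0 => /= e0; apply/andP; split; lra.
Qed.

Lemma mfun_coord d (T : measurableType d) (F : T -> Rn R n) :
  (forall i, measurable_fun setT (fun t => F t i 0)) -> measurable_fun setT F.
Proof.
move=> mF; apply: (@measurability _ _ _ _ setT F open) => //.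
move=> _ [U oU <-]; rewrite setTI.
pose B := fun k : nat => match unpickle k with
  | Some cr => if `[< box cr `<=` U >] then F @^-1` box cr else set0
  | None => set0 end.
have -> : F @^-1` U = \bigcup_k B k.
  apply/seteqP; split => t /=.
    move=> Ut; have [cr [h1 h2]] := open_cover oU Ut.
    by exists (pickle cr) => //; rewrite /B pickleK asboolT.
  case=> k _; rewrite /B; case: unpickle => [cr|//]; case: asboolP => // h.
  exact: h.
apply: bigcupT_measurable => k; rewrite /B; case: unpickle => [cr|//]; case: asboolP => // _.
apply: meas_forall => i.
have -> : (fun t => is_true (`|F t i 0 - ratr (cr.1 i)| < ratr cr.2)) =
   (fun t => F t i 0) @^-1` `](ratr (cr.1 i) - ratr cr.2), (ratr (cr.1 i) + ratr cr.2)[.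
  by apply/seteqP; split => t /=; rewrite in_itv /= ltr_distl.
rewrite -[X in measurable X]setTI; apply: mF => //; exact: measurable_itv.
Qed.

End meas.


Section integ.
Variables (d : measure_display) (T : measurableType d) (R : realType).
Variable mu : {measure set T -> \bar R}.

Definition sq (f : T -> R) :=
  measurable_fun setT f /\ mu.-integrable setT (fun x => (f x ^+ 2)%:E).

Lemma sq_mint f g : sq f -> sq g -> mu.-integrable setT (fun x => (f x * g x)%:E).
Proof.
move=> [mf if2] [mg ig2].
apply: le_integrable (integrableD measurableT if2 ig2) => //.
  by apply/measurable_EFinP; apply: measurable_funM.
move=> x _ /=; rewrite lee_fin.
rewrite (ger0_norm (x := f x ^+ 2 + g x ^+ 2)); last by rewrite addr_ge0 // sqr_ge0.
rewrite normrM; have := normr_ge0 (f x); have := normr_ge0 (g x).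
rewrite -(real_normK (num_real (f x))) -(real_normK (num_real (g x))).
move: `|f x| `|g x| => a b; nra.
Qed.

Lemma sqD f g : sq f -> sq g -> sq (fun x => f x + g x).
Proof.
move=> [mf if2] [mg ig2]; split; first exact: measurable_funD.
have i2 : mu.-integrable setT (fun x => ((2 * f x ^+ 2) + (2 * g x ^+ 2))%:E).
  apply: (@eq_integrable _ _ _ mu setT measurableT (fun x => (2%:E * (f x ^+ 2)%:E) + (2%:E * (g x ^+ 2)%:E))%E).
    by move=> x _; rewrite /= -!EFinM -EFinD.
  apply: integrableD => //; exact: integrableZl.
apply: le_integrable i2 => //.
  by apply/measurable_EFinP; apply: measurable_funM; apply: measurable_funD.
move=> x _ /=; rewrite lee_fin ger0_norm ?sqr_ge0 // ger0_norm; last first.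
  by rewrite addr_ge0 // mulr_ge0 // sqr_ge0.
move: (f x) (g x) => a b; rewrite -subr_ge0.
have -> : 2 * a ^+ 2 + 2 * b ^+ 2 - (a + b) ^+ 2 = (a - b) ^+ 2 by ring.
exact: sqr_ge0.
Qed.

Lemma sqZ c f : sq f -> sq (fun x => c * f x).
Proof.
move=> [mf if2]; split; first exact: measurable_funM.
apply: (@eq_integrable _ _ _ mu setT measurableT (fun x => (c ^+ 2)%:E * (f x ^+ 2)%:E)%E).
  by move=> x _; rewrite -EFinM exprMn.
exact: integrableZl.
Qed.

Lemma sq0 : sq (fun _ => 0).
Proof.
split => //; apply: (@eq_integrable _ _ _ mu setT measurableT (fun x => 0%E)).
  by move=> x _; rewrite expr0n.
exact: integrable0.
Qed.

Lemma sq_sum (I : Type) (s : seq I) (F : I -> T -> R) :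
  (forall i, sq (F i)) -> sq (fun x => \sum_(i <- s) F i x).
Proof.
move=> hF; elim: s => [|a s ih].
  by apply: (eq_ind _ _ sq0); apply/funext => x; rewrite big_nil.
apply: (eq_ind _ _ (sqD (hF a) ih)); apply/funext => x; rewrite big_cons.
by [].
Qed.

Lemma Rint_sum (I : Type) (s : seq I) (F : I -> T -> R) :
  (forall i, mu.-integrable setT (EFin \o F i)) ->
  Rintegral mu setT (fun x => \sum_(i <- s) F i x) =
  \sum_(i <- s) Rintegral mu setT (F i).
Proof.
move=> hF; elim: s => [|a s ih].
  rewrite big_nil; under eq_Rintegral do rewrite big_nil.
  by rewrite Rintegral_cst // mul0r.
rewrite big_cons -ih; under eq_Rintegral do rewrite big_cons.
rewrite RintegralD //.
apply: (@eq_integrable _ _ _ mu setT measurableT (fun x => \sum_(i <- s) (F i x)%:E)%E).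
  by move=> x _; rewrite /= sumEFin.
exact: (integrable_sum measurableT s (fun i _ => hF i)).
Qed.

Definition L2 (m : nat) (F : T -> 'cV[R]_m) := forall i, sq (fun x => F x i 0).

Lemma outerE (m q : nat) (u : 'cV[R]_m) (v : 'cV[R]_q) i j :
  (u *m v^T) i j = u i 0 * v j 0.
Proof. by rewrite !mxE big_ord1 !mxE. Qed.

Lemma L2_lin (p m : nat) (B : 'M[R]_(p, m)) (F : T -> 'cV[R]_m) :
  L2 F -> L2 (fun x => B *m F x).
Proof.
move=> hF i.
have -> : (fun x => (B *m F x) i 0) = (fun x => \sum_(k < m) B i k * F x k 0).
  by apply/funext => x; rewrite mxE.
by apply: sq_sum => k; exact: sqZ.
Qed.

Lemma L2_add (m : nat) (F G : T -> 'cV[R]_m) :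
  L2 F -> L2 G -> L2 (fun x => F x + G x).
Proof.
move=> hF hG i.
have -> : (fun x => (F x + G x) i 0) = (fun x => F x i 0 + G x i 0).
  by apply/funext => x; rewrite mxE.
exact: sqD.
Qed.

Lemma mxint_tr (p q : nat) (H : T -> 'M[R]_(p, q)) :
  mx_integral mu (fun x => (H x)^T) = (mx_integral mu H)^T.
Proof.
apply/matrixP => i j; rewrite !mxE.
by under eq_Rintegral => x _ do rewrite mxE.
Qed.

Lemma L2_mint (m q : nat) (F : T -> 'cV[R]_m) (G : T -> 'cV[R]_q) i j :
  L2 F -> L2 G -> mu.-integrable setT (EFin \o (fun x => F x i 0 * G x j 0)).
Proof. by move=> hF hG; apply: sq_mint. Qed.

Lemma mxint_linl (p m q : nat) (B : 'M[R]_(p, m)) (F : T -> 'cV[R]_m)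
  (G : T -> 'cV[R]_q) : L2 F -> L2 G ->
  mx_integral mu (fun x => (B *m F x) *m (G x)^T) =
  B *m mx_integral mu (fun x => F x *m (G x)^T).
Proof.
move=> hF hG; apply/matrixP => i j; rewrite !mxE.
under eq_Rintegral => x _ do rewrite outerE mxE mulr_suml.
rewrite Rint_sum; last first.
  move=> k; apply: (@eq_integrable _ _ _ mu setT measurableT
     (fun x => (B i k)%:E * (F x k 0 * G x j 0)%:E)%E).
    by move=> x _; rewrite /= -EFinM mulrA.
  exact/integrableZl/(L2_mint _ _ hF hG).
apply: eq_bigr => k _; rewrite mxE.
under eq_Rintegral => x _ do rewrite -mulrA.
rewrite RintegralZl //; last exact: (L2_mint _ _ hF hG).
congr (_ * _); apply: eq_Rintegral => x _; rewrite outerE.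
by [].
Qed.

Lemma mxint_linr (p m q : nat) (B : 'M[R]_(p, q)) (F : T -> 'cV[R]_m)
  (G : T -> 'cV[R]_q) : L2 F -> L2 G ->
  mx_integral mu (fun x => F x *m (B *m G x)^T) =
  mx_integral mu (fun x => F x *m (G x)^T) *m B^T.
Proof.
move=> hF hG.
have -> : (fun x => F x *m (B *m G x)^T) = (fun x => ((B *m G x) *m (F x)^T)^T).
  by apply/funext => x; rewrite [RHS]trmx_mul trmxK.
rewrite (mxint_tr (fun x => B *m G x *m (F x)^T)) mxint_linl // trmx_mul.
rewrite -(mxint_tr (fun x => G x *m (F x)^T)).
congr (mx_integral _ _ *m _); apply/funext => x; by rewrite [LHS]trmx_mul trmxK.
Qed.

Lemma mxint_addr (m q : nat) (F : T -> 'cV[R]_m) (G H : T -> 'cV[R]_q) :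
  L2 F -> L2 G -> L2 H ->
  mx_integral mu (fun x => F x *m (G x + H x)^T) =
  mx_integral mu (fun x => F x *m (G x)^T) + mx_integral mu (fun x => F x *m (H x)^T).
Proof.
move=> hF hG hH; apply/matrixP => i j; rewrite !mxE.
under eq_Rintegral => x _ do rewrite outerE mxE mulrDr.
rewrite RintegralD //; try exact: L2_mint.
by congr (_ + _); apply: eq_Rintegral => x _; rewrite outerE.
Qed.

End integ.


Section ae.
Variables (d : measure_display) (T : measurableType d) (R : realType).
Variable mu : {measure set T -> \bar R}.

Lemma ae_int_eq (N : set T) (f g : T -> \bar R) : measurable N -> mu N = 0%E ->
  (forall x, ~ N x -> f x = g x) -> measurable_fun setT f -> measurable_fun setT g ->
  (\int[mu]_x f x = \int[mu]_x g x)%E.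
Proof.
move=> mN N0 fg mf mg; apply: ae_eq_integral => //.
exists N; split => // x /= h; apply: contrapT => Nx; apply: h => _.
exact: fg.
Qed.

Lemma ae_Rint (N : set T) (f g : T -> R) : measurable N -> mu N = 0%E ->
  (forall x, ~ N x -> f x = g x) -> measurable_fun setT f -> measurable_fun setT g ->
  Rintegral mu setT f = Rintegral mu setT g.
Proof.
move=> mN N0 fg mf mg; rewrite /Rintegral; congr fine.
apply: (ae_int_eq mN N0) => //.
- by move=> x /fg /= ->.
- exact/measurable_EFinP.
- exact/measurable_EFinP.
Qed.

Lemma ae_integrable (N : set T) (f g : T -> R) : measurable N -> mu N = 0%E ->
  (forall x, ~ N x -> f x = g x) -> measurable_fun setT f ->
  mu.-integrable setT (EFin \o g) -> mu.-integrable setT (EFin \o f).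
Proof.
move=> mN N0 fg mf /integrableP [mg ig]; apply/integrableP; split.
  exact/measurable_EFinP.
rewrite (ae_int_eq mN N0 (g := fun x => `|(EFin \o g) x|%E)) //.
- by move=> x /fg /= ->.
- by apply: measurableT_comp => //; exact/measurable_EFinP.
- by apply: measurableT_comp.
Qed.

End ae.

Section rn.
Variables (R : realType) (n : nat).
Local Notation X := (Rn R n).

Lemma sqnorm_ge0 (x : 'cV[R]_n) : 0 <= sqnorm x.
Proof. by rewrite /sqnorm /dotv sumr_ge0 // => i _; rewrite -expr2 sqr_ge0. Qed.

Lemma coord_le_sqnorm (x : 'cV[R]_n) i : x i 0 ^+ 2 <= sqnorm x.
Proof.
rewrite /sqnorm /dotv (bigD1 i) //= -expr2 lerDl sumr_ge0 // => j _.
by rewrite -expr2 sqr_ge0.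
Qed.

Lemma sqnorm_eq0 (x : 'cV[R]_n) : sqnorm x = 0 -> x = 0.
Proof.
move=> h; apply: trmx_inj; rewrite trmx0; apply: rv_self_eq0.
rewrite trmxK; apply/rowP => i; rewrite (ord1 i) !mxE -[in RHS]h /sqnorm /dotv.
by apply: eq_bigr => j _; rewrite !mxE.
Qed.

Lemma msqnorm d (T : measurableType d) (F : T -> X) :
  (forall i, measurable_fun setT (fun t => F t i 0)) ->
  measurable_fun setT (fun t => sqnorm (F t)).
Proof.
move=> mF; rewrite /sqnorm /dotv.
by apply: measurable_sum => i; apply: measurable_funM.
Qed.

Lemma L2_of d (T : measurableType d) (mu : {measure set T -> \bar R}) (F : T -> X) :
  (forall i, measurable_fun setT (fun t => F t i 0)) ->
  (\int[mu]_x (sqnorm (F x))%:E < +oo)%E -> L2 mu F.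
Proof.
move=> mF fin i; split => //.
have iS : mu.-integrable setT (fun x => (sqnorm (F x))%:E).
  apply/integrableP; split; first exact/measurable_EFinP/msqnorm.
  apply: le_lt_trans fin; apply: ge0_le_integral => //.
  - by apply: measurableT_comp => //; exact/measurable_EFinP/msqnorm.
  - exact/measurable_EFinP/msqnorm.
  - by move=> x _; rewrite /= ger0_norm // sqnorm_ge0.
apply: le_integrable iS => //.
  by apply/measurable_EFinP; apply: measurable_funM.
move=> x _ /=; rewrite lee_fin !ger0_norm ?sqnorm_ge0 ?sqr_ge0 //.
exact: coord_le_sqnorm.
Qed.

Lemma sqnorm_fin d (T : measurableType d) (mu : {measure set T -> \bar R}) (F : T -> X) :
  L2 mu F -> (\int[mu]_x (sqnorm (F x))%:E < +oo)%E.
Proof.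
move=> hF.
have iS : mu.-integrable setT (fun x => (sqnorm (F x))%:E).
  apply: (@eq_integrable _ _ _ mu setT measurableT (fun x => \sum_(i < n) (F x i 0 ^+ 2)%:E)%E).
    move=> x _; rewrite /= sumEFin /sqnorm /dotv.
    by congr EFin; apply: eq_bigr => i _; rewrite expr2.
  exact: (integrable_sum measurableT _ (fun i _ => (hF i).2)).
move/integrableP: iS => [_]; apply: le_lt_trans.
apply: ge0_le_integral => //.
- by move=> x _; rewrite lee_fin sqnorm_ge0.
- apply/measurable_EFinP/msqnorm => i; by case: (hF i).
- by apply: measurableT_comp => //; apply/measurable_EFinP/msqnorm => i; case: (hF i).
- by move=> x _; rewrite /= ger0_norm // sqnorm_ge0.
Qed.

Lemma meas_notS (S : 'M[R]_n) : measurable [set x : X | ~~ inS S x].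
Proof.
have -> : [set x : X | ~~ inS S x] =
   ~` [set x : X | forall j, \sum_k (x : 'cV[R]_n) k 0 * cokermx S k j = 0].
  apply/seteqP; split => x /=.
    move=> h hx; move: h; rewrite /inS submxE; apply/negP/negPn/eqP.
    by apply/rowP => j; rewrite !mxE -[RHS](hx j); apply: eq_bigr => k _; rewrite !mxE.
  move=> h; apply/negP; rewrite /inS submxE => /eqP e; apply: h => j.
  have := congr1 (fun M : 'rV[R]_n => M 0 j) e; rewrite !mxE => hh.
  by rewrite -[RHS]hh; apply: eq_bigr => k _; rewrite [x^T 0 k]mxE.
apply: measurableC; apply: meas_forall => j.
rewrite -[X in measurable X]setTI.
have mf : measurable_fun setT (fun x : X => \sum_k (x : 'cV[R]_n) k 0 * cokermx S k j).
  by apply: measurable_sum => k; apply: measurable_funM => //; exact: mcoord.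
exact: (mf measurableT [set 0]).
Qed.

End rn.

Section pushf.
Variables (R : realType) (n : nat).
Local Notation X := (Rn R n).
Variable mu : {measure set X -> \bar R}.

Lemma push_sqnorm (F : {mfun X >-> X}) :
  (\int[push mu F]_y (sqnorm (y : 'cV[R]_n))%:E = \int[mu]_x (sqnorm (F x))%:E)%E.
Proof.
have := @ge0_integral_pushforward _ _ X X R F (@measurable_funPT _ _ _ _ F) mu setT
  (fun y : X => (sqnorm (y : 'cV[R]_n))%:E) measurableT.
rewrite preimage_setT => <- //.
- apply/measurable_EFinP/msqnorm => i; exact: mcoord.
- by move=> y _; rewrite lee_fin sqnorm_ge0.
Qed.

Lemma mcoordF (F : {mfun X >-> X}) i : measurable_fun setT (fun x => F x i 0).
Proof. exact: measurableT_comp (mcoord i 0) (@measurable_funPT _ _ _ _ F). Qed.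

Lemma L2_of_push (V : 'M[R]_n) (F : {mfun X >-> X}) :
  P2 V (push mu F) -> L2 mu F.
Proof.
case=> _ _ fin; apply: L2_of; first exact: mcoordF.
by rewrite -push_sqnorm.
Qed.

Lemma L2_id (W : 'M[R]_n) : P2 W mu -> L2 mu (fun x : X => (x : 'cV[R]_n)).
Proof. by case=> _ _ fin; apply: L2_of => // i; exact: mcoord. Qed.

Lemma push_P2 (W V : 'M[R]_n) (F : {mfun X >-> X}) :
  mu setT = 1%E -> mu [set x : X | ~~ inS W x] = 0%E ->
  (forall x, inS W x -> inS V (F x)) -> L2 mu F -> P2 V (push mu F).
Proof.
move=> m1 m0 hF l2; split.
- by rewrite pushE /pushforward preimage_setT.
- rewrite pushE /pushforward; apply/eqP; rewrite eq_le measure_ge0 andbT -m0.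
  apply: le_measure; rewrite ?inE.
  + have := @measurable_funPT _ _ _ _ F measurableT _ (meas_notS V).
    by rewrite setTI.
  + exact: meas_notS.
  + by move=> x /= h; apply/negP => /hF; apply/negP.
- by rewrite push_sqnorm; apply: sqnorm_fin.
Qed.

End pushf.

Section graph.
Variables (R : realType) (n : nat).
Local Notation X := (Rn R n).
Variable mu : {measure set X -> \bar R}.

Lemma coupling_graph (F : {mfun X >-> X}) :
  is_coupling mu (push mu F) (push mu (graph_map F)).
Proof.
move=> A mA; rewrite !pushE /pushforward; split; congr (mu _);
  by apply/seteqP; split => x /=; rewrite /graph_map /=; tauto.
Qed.

Lemma graph_mxint (F : {mfun X >-> X}) :
  L2 mu (fun x : X => (x : 'cV[R]_n)) -> L2 mu F ->
  mx_integral (push mu (graph_map F)) (fun p => (p.1 : 'cV[R]_n) *m (p.2 : 'cV[R]_n)^T)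
  = mx_integral mu (fun x : X => (x : 'cV[R]_n) *m (F x)^T).
Proof.
move=> hI hF; apply/matrixP => i j; rewrite !mxE.
under eq_Rintegral => p _ do rewrite outerE.
under [RHS]eq_Rintegral => x _ do rewrite outerE.
rewrite /Rintegral; congr fine.
have mf : measurable_fun setT
    (EFin \o (fun p : X * X => (p.1 : 'cV[R]_n) i 0 * (p.2 : 'cV[R]_n) j 0)).
  apply/measurable_EFinP; apply: measurable_funM.
    exact: measurableT_comp (mcoord i 0) measurable_fst.
  exact: measurableT_comp (mcoord j 0) measurable_snd.
have := @integral_pushforward _ _ X (X * X)%type R (graph_map F)
  (@measurable_funPT _ _ _ _ (graph_map F)) mu setT _ mf.
rewrite preimage_setT => -> //.
exact: (L2_mint _ _ hI hF).
Qed.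

Lemma frame_sym : (frame_op mu)^T = frame_op mu.
Proof.
rewrite /frame_op -mxint_tr; congr mx_integral; apply/funext => y.
by rewrite trmx_mul trmxK.
Qed.

Lemma frame_subW (W : 'M[R]_n) : mu [set x : X | ~~ inS W x] = 0%E ->
  L2 mu (fun x : X => (x : 'cV[R]_n)) -> (frame_op mu <= W)%MS.
Proof.
move=> m0 hI; rewrite submxE; set C := cokermx W.
have hC := L2_lin C^T hI.
rewrite -[C]trmxK /frame_op -(mxint_linr _ hI hI).
apply/eqP/matrixP => i j; rewrite !mxE.
rewrite (@ae_Rint _ _ _ mu [set x : X | ~~ inS W x] _ (fun _ => 0)) //.
- by rewrite Rintegral_cst // mul0r.
- exact: meas_notS.
- move=> x /= /negP; rewrite negbK /inS submxE => /eqP hx.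
  rewrite outerE.
  have -> : (C^T *m x) j 0 = (x^T *m C) 0 j.
    by rewrite -[C^T *m x]trmxK trmx_mul trmxK mxE.
  by rewrite hx mxE mulr0.
- have := L2_mint i j hI hC; rewrite /comp => /integrableP [/measurable_EFinP mf _].
  by under eq_fun do rewrite outerE.
Qed.

End graph.

Section framek.
Variables (R : realType) (n : nat).
Local Notation X := (Rn R n).
Variable mu : {measure set X -> \bar R}.

Lemma frame_ker (W : 'M[R]_n) : prob_frame W mu ->
  L2 mu (fun x : X => (x : 'cV[R]_n)) ->
  forall x : 'cV[R]_n, inS W x -> frame_op mu *m x = 0 -> x = 0.
Proof.
move=> [A [B [A0 AB hAB]]] hI x xW Sx.
have hx := L2_lin x^T hI.
have e : mx_integral mu (fun y : X => (x^T *m y) *m (x^T *m y)^T) = 0.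
  rewrite (mxint_linl _ hI hx) (mxint_linr _ hI hI) trmxK.
  by rewrite /frame_op in Sx; rewrite Sx mulmx0.
have dE : forall y : 'cV[R]_n, (x^T *m y) 0 0 = dotv x y.
  by move=> y; rewrite mxE /dotv; apply: eq_bigr => k _; rewrite mxE.
have := congr1 (fun M : 'M[R]_1 => M 0 0) e; rewrite !mxE.
under eq_Rintegral => y _ do rewrite outerE dE -expr2.
move=> h0.
have [h1 _] := hAB x xW.
have iD : mu.-integrable setT (fun y : X => ((dotv x y) ^+ 2)%:E).
  have [_ i2] := hx 0.
  by apply: (@eq_integrable _ _ _ mu setT measurableT _ _ _ i2) => y _; rewrite /= dE.
have : (\int[mu]_y ((dotv x y) ^+ 2)%:E)%E = 0%E.
  rewrite -(fineK (integrable_fin_num measurableT iD)).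
  by move: h0; rewrite /Rintegral => ->.
move=> h2; rewrite h2 lee_fin in h1.
apply: sqnorm_eq0; apply/eqP; rewrite eq_le sqnorm_ge0 andbT.
by rewrite -(pmulr_rle0 _ A0).
Qed.

End framek.

Lemma outer_meas d (T : measurableType d) (R : realType) (mu : {measure set T -> \bar R})
  (m q : nat) (F : T -> 'cV[R]_m) (G : T -> 'cV[R]_q) i j :
  L2 mu F -> L2 mu G -> measurable_fun setT (fun x => (F x *m (G x)^T) i j).
Proof.
move=> hF hG; have := L2_mint i j hF hG; rewrite /comp => /integrableP [/measurable_EFinP mf _].
by under eq_fun do rewrite outerE.
Qed.


Definition hmap (R : realType) (n : nat) (F : {mfun Rn R n >-> Rn R n}) (A : 'M[R]_n)
  : Rn R n -> Rn R n := fun x => F x + A *m x.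

Lemma hmap_meas (R : realType) (n : nat) (F : {mfun Rn R n >-> Rn R n}) (A : 'M[R]_n) :
  measurable_fun setT (hmap F A).
Proof.
apply: mfun_coord => i.
have -> : (fun t => hmap F A t i 0) = (fun t => F t i 0 + \sum_k A i k * (t : 'cV[R]_n) k 0).
  by apply/funext => t; rewrite /hmap !mxE.
apply: measurable_funD; first exact: mcoordF.
by apply: measurable_sum => k; apply: measurable_funM => //; exact: mcoord.
Qed.

HB.instance Definition _ (R : realType) (n : nat) (F : {mfun Rn R n >-> Rn R n}) (A : 'M[R]_n) :=
  isMeasurableFun.Build _ _ (Rn R n) (Rn R n) (hmap F A) (hmap_meas F A).

Unset Implicit Arguments.

Theorem corollary4p7 (R : realType) (n : nat) (W V : 'M[R]_n)
  (mu : probability (Rn R n) R) :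
  (W + perp V == 1%:M)%MS -> mxdirect (W + perp V) ->
  P2 W mu -> prob_frame W mu ->
  forall T : {mfun Rn R n >-> Rn R n},
    (forall x : Rn R n, inS W x -> inS V (T x)) ->
    (oblique_dual W V mu (push mu T) (push mu (graph_map T))
     <->
     exists h : {mfun Rn R n >-> Rn R n},
       [/\ forall x : Rn R n, inS W x -> inS V (h x),
           P2 V (push mu h),
           mx_integral mu (fun x : Rn R n =>
             (x : 'cV[R]_n) *m (h x : 'cV[R]_n)^T) = 0 &
           forall x : Rn R n, inS W x ->
             T x = oproj V (perp W) *m mp_inv (frame_op mu) *m x + h x]).
Proof.
move=> h1 h2 P2W fr T hT.
have [m1 m0 _] := P2W.
have hI := L2_id P2W.
have Ssym := frame_sym mu.
have SW := frame_subW m0 hI.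
have WS := W_sub_S Ssym SW (frame_ker fr hI).
have key := key_alg h1 h2 Ssym WS.
set S := frame_op mu in Ssym SW WS key *.
set A := oproj V (perp W) *m mp_inv S in key *.
have lin : mx_integral mu (fun x : Rn R n => (x : 'cV[R]_n) *m (A *m x)^T) = S *m A^T.
  exact: mxint_linr.
split.
- case=> P2V coup mxi.
  have hTl := L2_of_push P2V.
  pose h := (hmap T (- A) : {mfun Rn R n >-> Rn R n}).
  have hl : L2 mu h := L2_add hTl (L2_lin (- A) hI).
  have hV : forall x : Rn R n, inS W x -> inS V (h x).
    move=> x xW; rewrite /= /hmap /inS linearD /= addmx_sub //; first exact: hT.
    rewrite mulNmx linearN /= eqmx_opp -mulmxA.
    exact: oproj_in.
  exists h; split => //.
  + exact: push_P2 m1 m0 hV hl.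
  + have e : mx_integral mu (fun x : Rn R n => (x : 'cV[R]_n) *m (T x)^T) =
        mx_integral mu (fun x : Rn R n => (x : 'cV[R]_n) *m (h x)^T) +
        mx_integral mu (fun x : Rn R n => (x : 'cV[R]_n) *m (A *m x)^T).
      rewrite -mxint_addr //; last exact: L2_lin.
      congr mx_integral; apply/funext => x.
      by rewrite /h /= /hmap mulNmx addrNK.
    rewrite -(graph_mxint hI hTl) mxi lin key in e.
    by apply: (addIr (oproj W (perp V))); rewrite add0r -e.
  + by move=> x _; rewrite /h /= /hmap mulNmx addrC addrNK.
- case=> h [hV P2h i0 Th].
  have hl := L2_of_push P2h.
  have hG : L2 mu (fun x : Rn R n => A *m x + h x) := L2_add (L2_lin A hI) hl.
  have hTl : L2 mu T.
    move=> i; split; first exact: mcoordF.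
    apply: (@ae_integrable _ _ _ mu [set x : Rn R n | ~~ inS W x]
      (fun x => T x i 0 ^+ 2) (fun x => (A *m x + h x) i 0 ^+ 2) (meas_notS W) m0).
    * move=> x /negP; rewrite negbK => xW; by rewrite Th.
    * by apply: measurable_funM; exact: mcoordF.
    * exact: (hG i).2.
  split.
  + exact: push_P2 m1 m0 hT hTl.
  + exact: coupling_graph.
  + rewrite (graph_mxint hI hTl).
    have -> : mx_integral mu (fun x : Rn R n => (x : 'cV[R]_n) *m (T x)^T) =
        mx_integral mu (fun x : Rn R n => (x : 'cV[R]_n) *m (A *m x + h x)^T).
      apply/matrixP => i j; rewrite !mxE.
      apply: (ae_Rint (meas_notS W) m0).
      * by move=> x /negP; rewrite negbK => xW; rewrite Th.
      * exact: outer_meas.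
      * exact: outer_meas.
    rewrite mxint_addr //; last exact: L2_lin.
    by rewrite lin i0 addr0 key.
Qed.
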